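(* For all $N_1,N_2\ge0$, the multiplication morphism $\mathfrak m_{N_1,N_2}:\mathcal M(N_1,K)\times\mathcal M(N_2,K)\to\mathcal M(N_1+N_2,K)$ is dominant.
   Context: $\mathcal M(N,K)=\mathrm{Rep}(N,K)/\!/\mathrm{GL}_N$, with $\mathrm{Rep}(N,K)$ the triples $(B,\psi,\overline\psi)$, $B\in\mathrm{Mat}_{N\times N}(\mathbb C)$, $\psi\in\mathrm{Mat}_{N\times K}$, $\overline\psi\in\mathrm{Mat}_{K\times N}$, and $g\cdot(B,\psi,\overline\psi)=(gBg^{-1},g\psi,\overline\psi g^{-1})$. $\mathfrak m_{N_1,N_2}$ sends $(B^{(1)},\psi^{(1)},\overline\psi^{(1)})\times(B^{(2)},\psi^{(2)},\overline\psi^{(2)})$ to $\left(\begin{bmatrix}B^{(1)}&\psi^{(1)}\overline\psi^{(2)}\\-\psi^{(2)}\overline\psi^{(1)}&B^{(2)}\end{bmatrix},\begin{bmatrix}\psi^{(1)}\\\psi^{(2)}\end{bmatrix},\begin{bmatrix}\overline\psi^{(1)}&\overline\psi^{(2)}\end{bmatrix}\right)$. *)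

(* Defs.v *)
From HB Require Import structures.
From mathcomp Require Import all_boot all_order all_algebra.
From mathcomp Require Import complex.
From mathcomp Require Import Rstruct.
From mathcomp Require Import mpoly.
From Stdlib Require Import Reals.
Set Implicit Arguments. Unset Strict Implicit. Unset Printing Implicit Defensive.
Import Order.TTheory GRing.Theory Num.Theory.
Local Open Scope ring_scope.

Definition C : closedFieldType := (Rdefinitions.R)[i].

(* Rep(N,K): triples (B, psi, psibar) *)
Definition Rep (N K : nat) : Type :=
  ('M[C]_N * 'M[C]_(N, K) * 'M[C]_(K, N))%type.

Definition repdim (N K : nat) : nat := (N * N + N * K + K * N)%N.

Definition rep_coords (N K : nat) (x : Rep N K) : 'I_(repdim N K) -> C :=
  fun i => (row_mx (row_mx (mxvec x.1.1) (mxvec x.1.2)) (mxvec x.2)) ord0 i.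

(* regular functions on Rep(N,K): polynomials in the coordinates *)
Definition rep_eval (N K : nat) (f : {mpoly C[repdim N K]}) (x : Rep N K) : C :=
  f.@[rep_coords x].

Definition rep_act (N K : nat) (g : 'M[C]_N) (x : Rep N K) : Rep N K :=
  (g *m x.1.1 *m invmx g, g *m x.1.2, x.2 *m invmx g).

(* GL_N-invariant polynomials: the coordinate ring C[Rep(N,K)]^{GL_N}
   of the affine GIT quotient M(N,K) = Rep(N,K)//GL_N *)
Definition gl_invariant (N K : nat) (f : {mpoly C[repdim N K]}) : Prop :=
  forall (g : 'M[C]_N), g \in unitmx -> forall x : Rep N K,
    rep_eval f (rep_act g x) = rep_eval f x.

Definition rep_mult (N1 N2 K : nat) (x1 : Rep N1 K) (x2 : Rep N2 K) :
  Rep (N1 + N2) K :=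
  (block_mx x1.1.1 (x1.1.2 *m x2.2) (- (x2.1.2 *m x1.2)) x2.1.1,
   col_mx x1.1.2 x2.1.2,
   row_mx x1.2 x2.2).

(* Dominance of the induced morphism M(N1,K) x M(N2,K) -> M(N1+N2,K):
   its image is Zariski dense, i.e. every regular function on M(N1+N2,K)
   (= GL-invariant polynomial on Rep(N1+N2,K)) vanishing on the image is 0. *)
Definition mult_dominant (N1 N2 K : nat) : Prop :=
  forall f : {mpoly C[repdim (N1 + N2) K]}, gl_invariant f ->
    (forall (x1 : Rep N1 K) (x2 : Rep N2 K), rep_eval f (rep_mult x1 x2) = 0) ->
    f = 0.

(* Main.v *)
Require Import Defs.
From HB Require Import structures.
From mathcomp Require Import all_boot all_order all_algebra.
From mathcomp Require Import complex Rstruct mpoly spectral mxred.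
From mathcomp Require Import zify ring.
Set Implicit Arguments. Unset Strict Implicit. Unset Printing Implicit Defensive.
Import Order.TTheory GRing.Theory Num.Theory.
Local Open Scope ring_scope.
Lemma poly_vanish (p : {poly C}) : (forall t, p.[t] = 0) -> p = 0.
Proof.
move=> H; apply/eqP; apply: contraT => p0.
have := @max_poly_roots _ p [seq i%:R | i <- iota 0 (size p)] p0.
rewrite size_map size_iota ltnn; apply.
- by apply/allP => t _; rewrite /root H.
- rewrite map_inj_uniq ?iota_uniq // => i j /eqP; rewrite eqr_nat => /eqP.
  done.
Qed.

Lemma digits_inj n d (a b : 'I_n -> nat) :
  (forall i, (a i < d)%N) -> (forall i, (b i < d)%N) ->
  (\sum_(i < n) a i * d ^ i = \sum_(i < n) b i * d ^ i)%N -> a =1 b.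
Proof.
elim: n a b => [|n IH] a b ha hb.
  by move=> _ [].
rewrite !big_ord_recl /= !expn0 !muln1.
have e (c : 'I_n.+1 -> nat) : (\sum_(i < n) c (lift ord0 i) * d ^ bump 0 i
   = (\sum_(i < n) c (lift ord0 i) * d ^ i) * d)%N.
  rewrite big_distrl /=; apply: eq_bigr => i _.
  by rewrite /bump /= add1n expnS mulnCA mulnC.
rewrite !e // => E.
have d0 : (0 < d)%N by apply: leq_ltn_trans (ha ord0).
have E0 : a ord0 = b ord0.
  have := congr1 (modn^~ d) E.
  by rewrite addnC modnMDl addnC modnMDl !modn_small.
have E1 : (\sum_(i < n) a (lift ord0 i) * d ^ i = \sum_(i < n) b (lift ord0 i) * d ^ i)%N.
  have := congr1 (divn^~ d) E.
  by rewrite (addnC (a ord0)) (addnC (b ord0)) !divnMDl // !divn_small // !addn0.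
have IH' := IH _ _ (fun i => ha _) (fun i => hb _) E1.
by move=> i; case: (unliftP ord0 i) => [j ->|->].
Qed.

Lemma mpoly_vanish n (f : {mpoly C[n]}) : (forall v, f.@[v] = 0) -> f = 0.
Proof.
move=> H.
pose d := msize f.
pose e (m : 'X_{1..n}) := (\sum_(i < n) m i * d ^ i)%N.
pose p : {poly C} := \sum_(m <- msupp f) f@_m *: 'X^(e m).
have Hp : p = 0.
  apply: poly_vanish => t.
  rewrite -(H (fun i => t ^+ (d ^ i))) mevalE /p horner_sum.
  apply: eq_bigr => m _; rewrite hornerZ hornerXn; congr (_ * _).
  rewrite /e -prodrXr; apply: eq_bigr => i _.
  by rewrite -exprM mulnC.
have lt m i : m \in msupp f -> (m i < d)%N.
  move=> /msize_mdeg_lt; apply: leq_ltn_trans.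
  by rewrite mdegE (bigD1 i) //= leq_addr.
apply/mpolyP => m0; rewrite mcoeff0.
case: (boolP (m0 \in msupp f)) => [hm0|]; last exact: memN_msupp_eq0.
have := congr1 (fun q : {poly C} => q`_(e m0)) Hp.
rewrite /p coef0 coef_sum (bigD1_seq m0) //= ?msupp_uniq //.
rewrite coefZ coefXn eqxx mulr1 big_seq_cond big1 ?addr0 //.
move=> m /andP[hm hne]; rewrite coefZ coefXn.
case: eqP => [/esym Ee|]; last by rewrite mulr0.
exfalso; move/negP: hne; apply; apply/eqP/mnmP => i.
exact: (digits_inj (fun i => lt _ _ hm) (fun i => lt _ _ hm0) Ee).
Qed.
Lemma meval_line n (f : {mpoly C[n]}) (a b : 'I_n -> C) :
  exists p : {poly C}, forall t, p.[t] = f.@[fun i => a i + t * b i].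
Proof.
exists (\sum_(m <- msupp f) f@_m *: \prod_i ((a i)%:P + b i *: 'X) ^+ m i).
move=> t; rewrite mevalE horner_sum; apply: eq_bigr => m _.
rewrite hornerZ horner_prod; congr (_ * _); apply: eq_bigr => i _.
by rewrite horner_exp hornerD hornerC hornerZ hornerX mulrC.
Qed.
Definition Pm N K (x : Rep N K) : 'M[C]_N := x.1.1 + x.1.2 *m x.2.
Definition Qm N K (x : Rep N K) : 'M[C]_N := x.1.1 - x.1.2 *m x.2.

Lemma Pm_act N K g (x : Rep N K) : Pm (rep_act g x) = g *m Pm x *m invmx g.
Proof. by rewrite /Pm /rep_act /= mulmxDr mulmxDl !mulmxA. Qed.

Lemma Qm_act N K g (x : Rep N K) : Qm (rep_act g x) = g *m Qm x *m invmx g.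
Proof. by rewrite /Qm /rep_act /= mulmxBr mulmxBl !mulmxA. Qed.

Lemma core N1 N2 K (x : Rep (N1 + N2) K) (H1 : 'M[C]_(N1, N1 + N2))
  (H2 : 'M[C]_(N2, N1 + N2)) (A1 : 'M[C]_N1) (A2 : 'M[C]_N2) :
  col_mx H1 H2 \in unitmx -> H1 *m Qm x = A1 *m H1 -> H2 *m Pm x = A2 *m H2 ->
  exists x1 x2, rep_act (col_mx H1 H2) x = rep_mult x1 x2.
Proof.
set h := col_mx H1 H2 => hu hQ hP.
have hh : h *m invmx h = 1%:M by rewrite mulmxV.
have u1 : H1 *m invmx h = row_mx 1%:M 0.
  have := congr1 usubmx hh.
  by rewrite mul_col_mx col_mxKu scalar_mx_block /block_mx col_mxKu.
have u2 : H2 *m invmx h = row_mx 0 1%:M.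
  have := congr1 dsubmx hh.
  by rewrite mul_col_mx col_mxKd scalar_mx_block /block_mx col_mxKd.
have eQ : usubmx (Qm (rep_act h x)) = row_mx A1 0.
  rewrite Qm_act {1}/h mul_col_mx mul_col_mx col_mxKu hQ -mulmxA u1.
  by rewrite mul_mx_row mulmx1 mulmx0.
have eP : dsubmx (Pm (rep_act h x)) = row_mx 0 A2.
  rewrite Pm_act {1}/h mul_col_mx mul_col_mx col_mxKd hP -mulmxA u2.
  by rewrite mul_mx_row mulmx1 mulmx0.
move: eQ eP; case: (rep_act h x) => [[B a] b] /=.
rewrite /Qm /Pm /= => eQ eP.
exists (ulsubmx B, usubmx a, lsubmx b), (drsubmx B, dsubmx a, rsubmx b).
rewrite /rep_mult /= vsubmxK hsubmxK; congr (_, _, _).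
rewrite -{1}(submxK B); congr block_mx.
- have : rsubmx (usubmx (B - a *m b)) = 0 by rewrite eQ row_mxKr.
  rewrite linearB /= linearB /= => /eqP; rewrite subr_eq0 => /eqP E.
  rewrite -[ursubmx B]/(rsubmx (usubmx B)) E.
  by rewrite -{1}(vsubmxK a) -{1}(hsubmxK b) mul_col_row -/(ursubmx _) block_mxKur.
- have : lsubmx (dsubmx (B + a *m b)) = 0 by rewrite eP row_mxKl.
  rewrite linearD /= linearD /= => /eqP; rewrite addr_eq0 => /eqP E.
  rewrite -[dlsubmx B]/(lsubmx (dsubmx B)) E.
  by rewrite -{1}(vsubmxK a) -{1}(hsubmxK b) mul_col_row -/(dlsubmx _) block_mxKdl.
Qed.
Lemma steinitz k : forall m n (M : 'M[C]_(m, n)), row_free M -> (m + k)%N = n ->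
  exists c : 'I_k -> 'I_n, row_free (col_mx M (rowsub c 1%:M)).
Proof.
elim: k => [|k IH] m n M hM hmn.
  have c : 'I_0 -> 'I_n by case.
  exists c; rewrite (flatmx0 (rowsub c 1%:M)) /row_free rank_col_mx0.
  by move: hM; rewrite /row_free => /eqP ->; rewrite addn0.
have [j hj] : exists j, ~~ (row j (1%:M : 'M[C]_n) <= M)%MS.
  apply/row_subPn; rewrite sub1mx /row_full.
  by move: hM; rewrite /row_free => /eqP ->; apply/eqP; lia.
set e := row j (1%:M : 'M[C]_n).
have rM : \rank M = m by apply/eqP.
have rMe : \rank (M + e)%MS = m.+1.
  have h1 : (\rank M < \rank (M + e)%MS)%N.
    have : (M < M + e)%MS by rewrite ltmxE addsmxSl /= addsmx_sub submx_refl.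
    by rewrite ltmxErank => /andP[].
  have h2 := leq_of_leqif (mxrank_adds_leqif M e).
  have h3 : (\rank e <= 1)%N := rank_leq_row e.
  lia.
have hM' : row_free (col_mx M e).
  rewrite /row_free.
  have /eqmx_rank -> : (col_mx M e == M + e)%MS by apply/eqmxP; apply: eqmx_sym; exact: addsmxE.
  by rewrite rMe addn1.
have hmn' : (m + 1 + k)%N = n by rewrite -hmn; lia.
have [c' hc'] := IH _ _ _ hM' hmn'.
pose c (i : 'I_k.+1) : 'I_n := if unlift ord0 i is Some i' then c' i' else j.
exists c.
have E : (rowsub c 1%:M == e + rowsub c' 1%:M)%MS.
  apply/andP; split.
    apply/row_subP => i; rewrite row_rowsub /c.
    case: (unliftP ord0 i) => [i' _|_].
      apply: submx_trans (addsmxSr _ _).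
      by rewrite -(row_rowsub c') row_sub.
    exact: addsmxSl.
  rewrite addsmx_sub; apply/andP; split.
    have -> : e = row ord0 (rowsub c 1%:M) by rewrite row_rowsub /c unlift_none.
    exact: row_sub.
  apply/row_subP => i'; rewrite row_rowsub.
  have -> : c' i' = c (lift ord0 i') by rewrite /c liftK.
  by rewrite -row_rowsub row_sub.
rewrite /row_free.
have /eqmx_rank -> : (col_mx M (rowsub c 1%:M) == M + rowsub c 1%:M)%MS.
  by apply/eqmxP; apply: eqmx_sym; exact: addsmxE.
have /eqmx_rank -> : (M + rowsub c 1%:M == M + (e + rowsub c' 1%:M))%MS.
  by apply/eqmxP; apply: adds_eqmx => //; apply/eqmxP.
rewrite addsmxA.
have /eqmx_rank -> : (M + e + rowsub c' 1%:M == col_mx (col_mx M e) (rowsub c' 1%:M))%MS.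
  apply/eqmxP; apply: eqmx_trans (addsmxE _ _).
  by apply: adds_eqmx => //; exact: addsmxE.
move: hc'; rewrite /row_free => /eqP ->.
by apply/eqP; lia.
Qed.
Lemma trig_diag n (T : 'M[C]_n) : is_trig_mx T ->
  (forall i j, i != j -> T i i != T j j) ->
  exists2 E : 'M[C]_n, E \in unitmx & exists d, E *m T = diag_mx d *m E.
Proof.
case: n T => [|n] T hT hd.
  exists 1%:M; first by rewrite unitmx1.
  by exists 0; apply/matrixP => -[].
have : diagonalizable T.
  apply/diagonalizableP; exists [seq T i i | i <- enum 'I_n.+1].
    rewrite map_inj_uniq ?enum_uniq // => i j hij.
    by apply/eqP; apply/negPn/negP => /hd; rewrite hij eqxx.
  apply: dvdp_trans (mxminpoly_dvd_char T) _.
  by rewrite char_poly_trig // big_map big_enum /=.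
move=> [E hE] /similar_diagPex [d /(similarP hE) hd'].
by exists E => //; exists d.
Qed.
Lemma schur_any n (A : 'M[C]_n) :
  exists2 U : 'M[C]_n, U \in unitmx & is_trig_mx (U *m A *m invmx U).
Proof.
case: n A => [|n] A.
  exists 1%:M; first by rewrite unitmx1.
  by apply/is_trig_mxP => -[].
have [U HU HT] := @Schur C n.+1 A isT.
exists U; first exact: unitarymx_unit.
by move: HT; rewrite /similar_to conjumx // unitarymx_unit.
Qed.

Lemma row_free_usub m1 m2 n (W : 'M[C]_(m1 + m2, n)) :
  row_free W -> row_free (usubmx W).
Proof.
rewrite /row_free => /eqP hW.
have h1 : (\rank W <= \rank (usubmx W) + \rank (dsubmx W))%N.
  have /eqmx_rank -> : (W == usubmx W + dsubmx W)%MS.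
    by apply/eqmxP; rewrite -{1}(vsubmxK W); apply: eqmx_sym; exact: addsmxE.
  exact: leq_of_leqif (mxrank_adds_leqif _ _).
have h2 := rank_leq_row (dsubmx W).
have h3 := rank_leq_row (usubmx W).
apply/eqP; lia.
Qed.

Lemma good N1 N2 K (f : {mpoly C[repdim (N1 + N2) K]}) :
  gl_invariant f -> (forall x1 x2, rep_eval f (@rep_mult N1 N2 K x1 x2) = 0) ->
  forall x : Rep (N1 + N2) K,
  (exists2 E : 'M[C]_(N1 + N2), E \in unitmx & exists d, E *m Pm x = diag_mx d *m E) ->
  rep_eval f x = 0.
Proof.
move=> hinv hvan x [E hE [d hd]].
have [W hW hT] := schur_any (Qm x).
set L := W *m Qm x *m invmx W in hT.
have WQ : W *m Qm x = L *m W by rewrite /L mulmxKV.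
set H1 := usubmx W.
have hQ : H1 *m Qm x = ulsubmx L *m H1.
  have := congr1 usubmx WQ.
  rewrite -{1}(vsubmxK W) mul_col_mx col_mxKu -/H1 => ->.
  rewrite -{1}(vsubmxK L) mul_col_mx col_mxKu -{1}(hsubmxK (usubmx L)).
  rewrite -/(ursubmx L) (ursubmx_trig _ hT) // -{1}(vsubmxK W) mul_row_col.
  by rewrite mul0mx addr0.
have hM : row_free (H1 *m invmx E).
  rewrite /row_free mxrankMfree ?row_free_unit ?unitmx_inv //.
  by apply: row_free_usub; rewrite row_free_unit.
have [c hc] := @steinitz N2 N1 (N1 + N2) _ hM erefl.
have rs p q (A : 'M[C]_(N1 + N2, p)) (B : 'M[C]_(p, q)) :
    rowsub c A *m B = rowsub c (A *m B).
  by apply/matrixP => i j; rewrite !mxE; apply: eq_bigr => k _; rewrite !mxE.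
set H2 := rowsub c E.
have hu : col_mx H1 H2 \in unitmx.
  have -> : col_mx H1 H2 = col_mx (H1 *m invmx E) (rowsub c 1%:M) *m E.
    by rewrite mul_col_mx mulmxKV // rs mul1mx.
  by rewrite unitmx_mul hE -row_free_unit hc.
have hP : H2 *m Pm x = diag_mx (\row_k d 0 (c k)) *m H2.
  rewrite /H2 rs hd; apply/matrixP => i j.
  by rewrite !mul_diag_mx !mxE.
have [x1 [x2 hx]] := core hu hQ hP.
by rewrite -(hinv _ hu x) hx hvan.
Qed.
Lemma rep_surj N K (v : 'I_(repdim N K) -> C) :
  exists x : Rep N K, forall i, rep_coords x i = v i.
Proof.
pose r : 'rV[C]_(N * N + N * K + K * N) := \row_i v i.
exists (vec_mx (lsubmx (lsubmx r)), vec_mx (rsubmx (lsubmx r)), vec_mx (rsubmx r)).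
move=> i; rewrite /rep_coords /= !vec_mxK !hsubmxK.
by rewrite /r mxE.
Qed.

Lemma coords_line N K (B D : 'M[C]_N) (a : 'M[C]_(N, K)) (b : 'M[C]_(K, N)) t i :
  rep_coords (B + t *: D, a, b) i =
  rep_coords (B, a, b) i + t * rep_coords (D, 0 : 'M[C]_(N, K), 0 : 'M[C]_(K, N)) i.
Proof.
rewrite /rep_coords /=.
have -> : row_mx (row_mx (mxvec (B + t *: D)) (mxvec a)) (mxvec b) =
  row_mx (row_mx (mxvec B) (mxvec a)) (mxvec b) +
  t *: row_mx (row_mx (mxvec D) (mxvec (0 : 'M[C]_(N, K)))) (mxvec (0 : 'M[C]_(K, N))).
  rewrite !scale_row_mx !add_row_mx.
  by rewrite linearD linearZ /= !raddf0 !addr0.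
change ('I_(N * N + N * K + K * N)) in i.

by rewrite !mxE.
Qed.

Lemma addZ_mx n (A B : 'M[C]_n) (t : C) i j : (A + t *: B) i j = A i j + t * B i j.
Proof. by rewrite !mxE. Qed.

Theorem mainTheorem10 (N1 N2 K : nat) : mult_dominant N1 N2 K.
Proof.
move=> f hinv hvan.
apply: mpoly_vanish => v.
have [x hx] := rep_surj v.
rewrite -(meval_eq f hx) -/(rep_eval f x).
have [U hU hT] := schur_any (Pm x).
rewrite -(hinv _ hU x).
set y := rep_act U x.
have hPy : Pm y = U *m Pm x *m invmx U by rewrite Pm_act.
set T := U *m Pm x *m invmx U in hT hPy.
pose D : 'M[C]_(N1 + N2) := diag_mx (\row_i (i : nat)%:R).
pose yt (t : C) : Rep (N1 + N2) K := (y.1.1 + t *: D, y.1.2, y.2).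
have eD i j : D i j = (i : nat)%:R *+ (i == j) by rewrite /D !mxE.
have hPyt t : Pm (yt t) = T + t *: D by rewrite /Pm /= -hPy /Pm addrAC.
have [p hp] := meval_line f (rep_coords y)
   (rep_coords (D, 0 : 'M[C]_(N1 + N2, K), 0 : 'M[C]_(K, N1 + N2))).
have hpt t : p.[t] = rep_eval f (yt t).
  rewrite hp /rep_eval; apply: meval_eq => i.
  by rewrite /yt coords_line; case: (y) => [[]].
pose r : {poly C} := \prod_(i < N1 + N2) \prod_(j < N1 + N2 | i != j)
   ((T i i - T j j)%:P + ((i : nat)%:R - (j : nat)%:R) *: 'X).
have r0 : r != 0.
  apply/prodf_neq0 => i _; apply/prodf_neq0 => j hij.
  apply/eqP => /(congr1 (fun q : {poly C} => q`_1)).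
  rewrite coefD coefC coefZ coefX /= add0r mulr1 coef0 => /eqP.
  by rewrite subr_eq0 eqr_nat; apply/negP.
have hpr : p * r = 0.
  apply: poly_vanish => t; rewrite hornerM.
  have [/eqP -> |hr] := boolP (r.[t] == 0); first by rewrite mulr0.
  rewrite hpt (good hinv hvan) ?mul0r //.
  apply: trig_diag; rewrite hPyt.
    apply/is_trig_mxP => i j hij; rewrite addZ_mx eD.
    have -> : (i == j) = false by apply/eqP => E; move: hij; rewrite E ltnn.
    by move/is_trig_mxP: hT => -> //; rewrite mulr0n mulr0 addr0.
  move=> i j hij; rewrite !addZ_mx !eD !eqxx !mulr1n.
  move: hr; rewrite /r horner_prod => /prodf_neq0 /(_ i isT).
  rewrite horner_prod => /prodf_neq0 /(_ j hij).
  rewrite hornerD hornerC hornerZ hornerX; apply: contraNN => /eqP E.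
  apply/eqP.
  have -> : T i i - T j j + ((i : nat)%:R - (j : nat)%:R) * t =
    (T i i + t * (i : nat)%:R) - (T j j + t * (j : nat)%:R) by ring.
  by rewrite E subrr.
have hp0 : p = 0.
  by move/eqP: hpr; rewrite mulf_eq0 (negPf r0) orbF => /eqP.
have := hpt 0; rewrite hp0 horner0 => ->.
by rewrite /yt scale0r addr0; case: (y) => [[]].
Qed.
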